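(* Let $p$ be a prime, $k\ge1$, $n=4k$, and let $f:\mathbb{F}_{p^n}\to\mathbb{F}_{p^{2k}}$ be $f(x)=T^n_k(x)+T^n_{2k}(x)$. Then: (1) every $\gamma\in\mathbb{F}_{p^n}^*$ with $\gamma+\gamma^{p^{2k}}=0$ is a $0$-translator of $f$, i.e. $f(x+u\gamma)-f(x)=0$ for all $x\in\mathbb{F}_{p^n}$ and all $u\in\mathbb{F}_{p^{2k}}$; (2) if $p=2$, then every $\gamma\in\mathbb{F}_{2^n}^*$ is a $(k,\gamma^{2^k}+\gamma^{2^{3k}})$-Frobenius translator of $f$, i.e. $f(x+u\gamma)-f(x)=u^{2^k}(\gamma^{2^k}+\gamma^{2^{3k}})$ for all $x\in\mathbb{F}_{2^n}$ and all $u\in\mathbb{F}_{2^{2k}}$.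
   Context: For $m\mid n$, $T^n_m:\mathbb{F}_{p^n}\to\mathbb{F}_{p^m}$ denotes the relative trace $T^n_m(\beta)=\beta+\beta^{p^m}+\dots+\beta^{p^{(n/m-1)m}}$. For a function $f:\mathbb{F}_{p^n}\to\mathbb{F}_{p^{m}}$ with $m\mid n$, $\gamma\in\mathbb{F}_{p^n}^*$, $b\in\mathbb{F}_{p^m}$ and $i\in\{0,\dots,m-1\}$, $\gamma$ is an $(i,b)$-Frobenius translator of $f$ (with respect to $\mathbb{F}_{p^m}$) if $f(x+u\gamma)-f(x)=u^{p^i}b$ for all $x\in\mathbb{F}_{p^n}$ and all $u\in\mathbb{F}_{p^m}$; a $0$-translator is one with $b=0$. *)

(* Defs.v *)
(* F_{p^n} is modelled as an arbitrary finite field F with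
   #|F| = p^n; the subfield F_{p^m} (m | n) is the set of fixed points of
   x |-> x^(p^m) inside F. *)
From HB Require Import structures.
From mathcomp Require Import all_boot all_order all_algebra all_field.
Set Implicit Arguments. Unset Strict Implicit. Unset Printing Implicit Defensive.
Import GRing.Theory.
Local Open Scope ring_scope.

Definition in_subfield (F : finFieldType) (p m : nat) (x : F) : bool :=
  x ^+ (p ^ m) == x.

Definition rtrace (F : finFieldType) (p n m : nat) (b : F) : F :=
  \sum_(i < n %/ m) b ^+ (p ^ (i * m)).

Definition frob_translator (F : finFieldType) (p m : nat) (f : F -> F)
    (gamma : F) (i : nat) (b : F) : Prop :=
  [/\ gamma != 0, in_subfield p m b, (i < m)%N &
      forall x u : F, in_subfield p m u ->
        f (x + u * gamma) - f x = u ^+ (p ^ i) * b].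

Definition zero_translator (F : finFieldType) (p m : nat) (f : F -> F)
    (gamma : F) : Prop :=
  gamma != 0 /\
  forall x u : F, in_subfield p m u -> f (x + u * gamma) - f x = 0.

Definition f_prop2 (F : finFieldType) (p k : nat) (x : F) : F :=
  rtrace p (4 * k) k x + rtrace p (4 * k) (2 * k) x.

(* Main.v *)
Require Import Defs.
From HB Require Import structures.
From mathcomp Require Import all_boot all_order all_algebra all_field.
From mathcomp Require Import ring zify.
Import GRing.Theory.
Local Open Scope ring_scope.

Section Aux.
Variables (F : finFieldType) (p : nat) (pF : p \in [pchar F]).

Lemma frD e (x y : F) : (x + y) ^+ (p ^ e) = x ^+ (p ^ e) + y ^+ (p ^ e).
Proof.
apply: exprDn_pchar.
rewrite (eq_pnat _ (pcharf_eq pF)) pnatX pnat_id //.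
exact: (pcharf_prime pF).
Qed.

Lemma frN e (x : F) : (- x) ^+ (p ^ e) = - x ^+ (p ^ e).
Proof.
apply/eqP; rewrite -subr_eq0 opprK -frD addNr expr0n.
have p0 : (p ^ e != 0)%N by rewrite expn_eq0 negb_and -lt0n prime_gt0 ?(pcharf_prime pF).
by rewrite (negbTE p0). Qed.

Lemma frC a b (x : F) : (x ^+ (p ^ a)) ^+ (p ^ b) = x ^+ (p ^ (a + b)).
Proof. by rewrite -exprM -expnD. Qed.
End Aux.
Arguments frD {F p} pF e x y.
Arguments frN {F p} pF e x.
Arguments frC {F} p a b x.

Theorem proposition2 (F : finFieldType) (p k : nat) :
  prime p -> (0 < k)%N -> #|F| = (p ^ (4 * k))%N ->
  (forall gamma : F, gamma != 0 -> gamma + gamma ^+ (p ^ (2 * k)) = 0 ->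
     zero_translator p (2 * k) (f_prop2 p k) gamma) /\
  (p = 2%N -> forall gamma : F, gamma != 0 ->
     frob_translator p (2 * k) (f_prop2 p k) gamma k
       (gamma ^+ (2 ^ k) + gamma ^+ (2 ^ (3 * k)))).
Proof.
move=> pp k0 cF.
have pF : p \in [pchar F] by apply: card_finPcharP cF pp.
have fix4 : forall x : F, x ^+ (p ^ (4 * k)) = x by move=> x; rewrite -cF expf_card.
have fE : forall x : F, f_prop2 p k x =
   x + x ^+ (p ^ k) + x ^+ (p ^ (2 * k)) + x ^+ (p ^ (3 * k))
   + (x + x ^+ (p ^ (2 * k))).
  move=> x; rewrite /f_prop2 /rtrace mulnK //.
  have -> : ((4 * k) %/ (2 * k) = 2)%N.
    by rewrite (_ : 4 * k = 2 * (2 * k))%N ?mulnK ?muln_gt0 // mulnA.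
  rewrite !big_ord_recr big_ord0 /= !mul0n !mul1n expn0 expr1 add0r.
  by rewrite big_ord0 add0r.
have fA : forall x y : F, f_prop2 p k (x + y) - f_prop2 p k x = f_prop2 p k y.
  move=> x y; rewrite !fE !(frD pF).
  move: (x ^+ _) (x ^+ (p ^ (2 * k))) (x ^+ (p ^ (3 * k))) => a b c.
  move: (y ^+ _) (y ^+ (p ^ (2 * k))) (y ^+ (p ^ (3 * k))) => a' b' c'.
  by ring.
have e3 : (3 * k = 2 * k + k)%N by lia.
split.
  move=> g g0 hg; split => // x u /eqP hu; rewrite fA.
  set y := u * g.
  have y2 : y ^+ (p ^ (2 * k)) = - y.
    have gq : g ^+ (p ^ (2 * k)) = - g by apply/eqP; rewrite -subr_eq0 opprK addrC hg.
    by rewrite /y exprMn hu gq mulrN.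
  have y3 : y ^+ (p ^ (3 * k)) = - y ^+ (p ^ k).
    by rewrite e3 -frC y2 (frN pF).
  rewrite fE y2 y3.
  move: (y ^+ (p ^ k)) => a.
  by ring.
move=> p2 g g0; subst p.
have two0 : (2%:R : F) = 0 := pcharf0 pF.
have dbl : forall z : F, z + z = 0.
  by move=> z; rewrite -mulr2n -mulr_natr two0 mulr0.
have e5 : (3 * k + 2 * k = 4 * k + k)%N by lia.
split => //.
- apply/eqP; rewrite frD // !frC.
  by rewrite (addnC k) -e3 e5 -frC fix4 addrC.
- by rewrite -[X in (X < _)%N]mul1n ltn_mul2r k0.
move=> x u /eqP hu; rewrite fA fE.
set y := u * g.
have -> : y + y ^+ (2 ^ k) + y ^+ (2 ^ (2 * k)) + y ^+ (2 ^ (3 * k)) +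
  (y + y ^+ (2 ^ (2 * k))) = y ^+ (2 ^ k) + y ^+ (2 ^ (3 * k)) +
  ((y + y) + (y ^+ (2 ^ (2 * k)) + y ^+ (2 ^ (2 * k)))).
  move: (y ^+ (2 ^ k)) (y ^+ (2 ^ (2 * k))) (y ^+ (2 ^ (3 * k))) => a b c.
  by ring.
have u3 : u ^+ (2 ^ (3 * k)) = u ^+ (2 ^ k) by rewrite e3 -frC hu.
rewrite (dbl y) (dbl (y ^+ _)) addr0 addr0.
by rewrite /y !exprMn u3 mulrDr.
Qed.
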